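(* Let $\lambda$ be a singular cardinal of cofinality $\kappa$ and $\vec\lambda=\langle\lambda_i:i<\kappa\rangle$ a strictly increasing sequence of regular cardinals converging to $\lambda$. Then $\mathbb G(\vec\lambda)$ is $(\lambda+1)$-strategically closed.
   Context: For $f,g:\kappa\to\mathrm{ON}$, $f<^*g$ means there is $j<\kappa$ with $f(i)<g(i)$ for all $i\ge j$. Given a $<^*$-increasing sequence $\langle f_\gamma:\gamma<\beta\rangle$ in $\prod_{i<\kappa}\lambda_i$, $\beta$ is a good point if there are an unbounded $A\subseteq\beta$ of order type $\mathrm{cf}(\beta)$ and $j<\kappa$ such that for all $i\ge j$, $\langle f_\gamma(i):\gamma\in A\rangle$ is strictly increasing. $\mathbb G(\vec\lambda)$ consists of sequences $\langle f_\beta:\beta\le\alpha\rangle$ with $\alpha<\lambda^+$ such that for all $\beta\le\alpha$: $f_\beta\in\prod_{i<\kappa}\lambda_i$; $f_\gamma<^*f_\beta$ for all $\gamma<\beta$; and if $\mathrm{cf}(\beta)>\kappa$ then $\beta$ is a good point of $\langle f_\gamma:\gamma<\beta\rangle$. Order is end-extension. A poset is $(\lambda+1)$-strategically closed if in the game of length $\lambda+1$ in which two players alternately choose a decreasing sequence of conditions $\langle p_\xi:\xi\le\lambda\rangle$, with Player II choosing at even stages (including all limit stages and stage $0$), Player II has a strategy guaranteeing that she can make a legal move at every stage $\xi\le\lambda$. *)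

(* Defs.v *)
(* Ordinals are modelled as the elements of an arbitrary
   type O carrying a strict well-order lt (all notions below are relative
   to (O, lt); every such O is isomorphic to an ordinal, so everything is
   absolute as long as O contains the ordinals mentioned). *)
From Stdlib Require Import Arith Bool.

Definition le {O : Type} (lt : O -> O -> Prop) (x y : O) : Prop := lt x y \/ x = y.

Definition well_order {O : Type} (lt : O -> O -> Prop) : Prop :=
  (forall x, ~ lt x x) /\
  (forall x y z, lt x y -> lt y z -> lt x z) /\
  (forall x y, lt x y \/ x = y \/ lt y x) /\
  well_founded lt.

Definition is_zero {O : Type} (lt : O -> O -> Prop) (a : O) : Prop :=
  forall x, ~ lt x a.

Definition is_succ {O : Type} (lt : O -> O -> Prop) (a b : O) : Prop :=
  lt a b /\ forall c, lt a c -> le lt b c.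

Definition is_limit {O : Type} (lt : O -> O -> Prop) (a : O) : Prop :=
  ~ is_zero lt a /\ forall b, lt b a -> exists c, lt b c /\ lt c a.

Definition infinite_ord {O : Type} (lt : O -> O -> Prop) (a : O) : Prop :=
  exists w, is_limit lt w /\ le lt w a.

Definition equipotent {O : Type} (lt : O -> O -> Prop) (a b : O) : Prop :=
  exists h : O -> O,
    (forall x, lt x a -> lt (h x) b) /\
    (forall x y, lt x a -> lt y a -> h x = h y -> x = y) /\
    (forall y, lt y b -> exists x, lt x a /\ h x = y).

Definition is_cardinal {O : Type} (lt : O -> O -> Prop) (a : O) : Prop :=
  forall b, lt b a -> ~ equipotent lt b a.

Definition cofinal_in {O : Type} (lt : O -> O -> Prop) (A : O -> Prop) (a : O) : Prop :=
  (forall x, A x -> lt x a) /\ (forall y, lt y a -> exists x, A x /\ le lt y x).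

Definition has_order_type {O : Type} (lt : O -> O -> Prop) (A : O -> Prop) (b : O) : Prop :=
  exists h : O -> O,
    (forall x, A x -> lt (h x) b) /\
    (forall x y, A x -> A y -> (lt x y <-> lt (h x) (h y))) /\
    (forall y, lt y b -> exists x, A x /\ h x = y).

Definition is_cof {O : Type} (lt : O -> O -> Prop) (a c : O) : Prop :=
  (exists A, cofinal_in lt A a /\ has_order_type lt A c) /\
  (forall d A, cofinal_in lt A a -> has_order_type lt A d -> le lt c d).

Definition regular_cardinal {O : Type} (lt : O -> O -> Prop) (a : O) : Prop :=
  is_cardinal lt a /\ infinite_ord lt a /\ is_cof lt a a.

Definition singular_cardinal {O : Type} (lt : O -> O -> Prop) (a : O) : Prop :=
  is_cardinal lt a /\ infinite_ord lt a /\ exists c, is_cof lt a c /\ lt c a.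

Definition is_succ_cardinal {O : Type} (lt : O -> O -> Prop) (a b : O) : Prop :=
  is_cardinal lt b /\ lt a b /\ forall c, is_cardinal lt c -> lt a c -> le lt b c.

Definition ltstar {O : Type} (lt : O -> O -> Prop) (kappa : O) (f g : O -> O) : Prop :=
  exists j, lt j kappa /\ forall i, le lt j i -> lt i kappa -> lt (f i) (g i).

Definition good_point {O : Type} (lt : O -> O -> Prop) (kappa : O)
    (F : O -> O -> O) (beta : O) : Prop :=
  exists (A : O -> Prop) (c : O),
    cofinal_in lt A beta /\ is_cof lt beta c /\ has_order_type lt A c /\
    exists j, lt j kappa /\
      forall i, le lt j i -> lt i kappa ->
        forall g d, A g -> A d -> lt g d -> lt (F g i) (F d i).

(* a condition <f_beta : beta <= clen> ; only values with beta <= clen and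
   i < kappa are meaningful *)
Record cond (O : Type) := Cond { clen : O; cseq : O -> O -> O }.
Arguments clen {O}.
Arguments cseq {O}.

Definition inG {O : Type} (lt : O -> O -> Prop) (kappa : O) (lam : O -> O)
    (lplus : O) (p : cond O) : Prop :=
  lt (clen p) lplus /\
  forall beta, le lt beta (clen p) ->
    (forall i, lt i kappa -> lt (cseq p beta i) (lam i)) /\
    (forall g, lt g beta -> ltstar lt kappa (cseq p g) (cseq p beta)) /\
    (forall c, is_cof lt beta c -> lt kappa c -> good_point lt kappa (cseq p) beta).

Definition extends {O : Type} (lt : O -> O -> Prop) (kappa : O) (p q : cond O) : Prop :=
  le lt (clen q) (clen p) /\
  forall beta i, le lt beta (clen q) -> lt i kappa -> cseq p beta i = cseq q beta i.

Fixpoint nsucc {O : Type} (lt : O -> O -> Prop) (k : nat) (delta xi : O) : Prop :=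
  match k with
  | 0 => xi = delta
  | S k' => exists eta, nsucc lt k' delta eta /\ is_succ lt eta xi
  end.

Definition even_ord {O : Type} (lt : O -> O -> Prop) (xi : O) : Prop :=
  exists delta k, (is_zero lt delta \/ is_limit lt delta) /\ Nat.even k = true /\
    nsucc lt k delta xi.

(* (len+1)-strategic closure of the poset (P, ext), ext p q meaning p <= q.
   A strategy for II maps a stage xi and the previous moves to a move; it may
   only depend on the moves at stages < xi. *)
Definition strat_closed {O X : Type} (lt : O -> O -> Prop) (P : X -> Prop)
    (ext : X -> X -> Prop) (len : O) : Prop :=
  exists sigma : O -> (O -> X) -> X,
    (forall xi p p', (forall eta, lt eta xi -> p eta = p' eta) -> sigma xi p = sigma xi p') /\
    (forall xi (p : O -> X), le lt xi len -> even_ord lt xi ->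
       (forall eta, lt eta xi ->
          P (p eta) /\ (forall eta', lt eta' eta -> ext (p eta) (p eta')) /\
          (even_ord lt eta -> p eta = sigma eta p)) ->
       P (sigma xi p) /\ forall eta, lt eta xi -> ext (sigma xi p) (p eta)).

(* Main.v *)
Require Import Defs.
From Stdlib Require Import Classical ClassicalEpsilon FunctionalExtensionality Lia Arith.

Section WO.
Variable O : Type.
Variable lt : O -> O -> Prop.
Hypothesis Hwo : well_order lt.
Variable inh : inhabited O.

Lemma lt_irr x : ~ lt x x.
Proof. destruct Hwo as [H _]. apply H. Qed.
Lemma lt_trans x y z : lt x y -> lt y z -> lt x z.
Proof. destruct Hwo as [_ [H _]]. apply H. Qed.
Lemma lt_tri x y : lt x y \/ x = y \/ lt y x.
Proof. destruct Hwo as [_ [_ [H _]]]. apply H. Qed.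
Lemma lt_wf : well_founded lt.
Proof. destruct Hwo as [_ [_ [_ H]]]. exact H. Qed.
Lemma lt_asym x y : lt x y -> ~ lt y x.
Proof. intros H1 H2. exact (lt_irr x (lt_trans _ _ _ H1 H2)). Qed.
Lemma le_refl x : le lt x x.
Proof. right; reflexivity. Qed.
Lemma lt_le x y : lt x y -> le lt x y.
Proof. left; assumption. Qed.
Lemma le_trans x y z : le lt x y -> le lt y z -> le lt x z.
Proof. intros [H|H] [H'|H']; subst; unfold le; auto. left; eapply lt_trans; eauto. Qed.
Lemma lt_le_trans x y z : lt x y -> le lt y z -> lt x z.
Proof. intros H [H'|H']; subst; auto. eapply lt_trans; eauto. Qed.
Lemma le_lt_trans x y z : le lt x y -> lt y z -> lt x z.
Proof. intros [H|H] H'; subst; auto. eapply lt_trans; eauto. Qed.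
Lemma not_lt_le x y : ~ lt x y -> le lt y x.
Proof. intros H. destruct (lt_tri x y) as [h|[h|h]]. contradiction. right; auto. left; auto. Qed.
Lemma le_not_lt x y : le lt x y -> ~ lt y x.
Proof. intros [H|H] H'; subst. exact (lt_asym _ _ H H'). exact (lt_irr _ H'). Qed.
Lemma le_or_lt x y : le lt x y \/ lt y x.
Proof. destruct (lt_tri x y) as [h|[h|h]]; [left;left|left;right|right]; auto. Qed.
Lemma le_antisym x y : le lt x y -> le lt y x -> x = y.
Proof. intros [H|H] H'; auto. exfalso; exact (le_not_lt _ _ H' H). Qed.

Lemma least_exists (P : O -> Prop) : (exists x, P x) -> exists x, P x /\ forall y, P y -> le lt x y.
Proof.
  intros [x Hx]. revert Hx. induction x as [x IH] using (well_founded_ind lt_wf). intros Hx.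
  destruct (classic (exists y, P y /\ lt y x)) as [[y [Py Hy]]|N].
  - exact (IH y Hy Py).
  - exists x. split; auto. intros y Py. apply not_lt_le. intro H. apply N. eauto.
Qed.

Definition minof (P : O -> Prop) : O := epsilon inh (fun x => P x /\ forall y, P y -> le lt x y).

Lemma minof_spec P : (exists x, P x) -> P (minof P) /\ forall y, P y -> le lt (minof P) y.
Proof. intros H. unfold minof. apply epsilon_spec. apply least_exists. exact H. Qed.

Lemma minof_P P x : P x -> P (minof P).
Proof. intros H. apply (minof_spec P); eauto. Qed.
Lemma minof_le P x : P x -> le lt (minof P) x.
Proof. intros H. apply (minof_spec P); eauto. Qed.

Definition choose {A : Type} (a : A) (P : A -> Prop) : A := epsilon (inhabits a) P.
Lemma choose_spec {A : Type} (a : A) (P : A -> Prop) : (exists x, P x) -> P (choose a P).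
Proof. intros H. unfold choose. apply epsilon_spec. exact H. Qed.

Section Rank.
Variable T : Type.
Variable R : T -> T -> Prop.
Hypothesis Rwf : well_founded R.
Hypothesis Rtrans : forall a b c, R a b -> R b c -> R a c.
Variable X : T -> Prop.

Definition rank : T -> O :=
  Fix Rwf (fun _ => O) (fun t rec => minof (fun e => forall s (H : R s t), X s -> lt (rec s H) e)).

Lemma rank_eq t : rank t = minof (fun e => forall s, R s t -> X s -> lt (rank s) e).
Proof.
  unfold rank at 1. rewrite Fix_eq.
  - reflexivity.
  - intros x f g Hfg.
    assert (E : f = g).
    { apply functional_extensionality_dep. intro y. apply functional_extensionality_dep. intro p. apply Hfg. }
    subst. reflexivity.
Qed.

Definition rbnd t := exists e, forall s, R s t -> X s -> lt (rank s) e.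

Lemma rank_lt t s : rbnd t -> R s t -> X s -> lt (rank s) (rank t).
Proof.
  intros [e He] Hs Xs. rewrite (rank_eq t).
  apply (minof_P (fun e => forall s, R s t -> X s -> lt (rank s) e) e He); auto.
Qed.

Lemma rank_min t e : (forall s, R s t -> X s -> lt (rank s) e) -> le lt (rank t) e.
Proof. intros H. rewrite rank_eq. apply minof_le. exact H. Qed.

Lemma rank_down :
  forall t, X t -> forall z, lt z (rank t) -> exists s, X s /\ R s t /\ rank s = z.
Proof.
  intros t. induction t as [t IH] using (well_founded_ind Rwf). intros Xt z Hz.
  destruct (classic (exists s, R s t /\ X s /\ le lt z (rank s))) as [[s [Rs [Xs Hle]]]|N].
  - destruct Hle as [Hl|He].
    + destruct (IH s Rs Xs z Hl) as [s' [Xs' [R' E]]]. exists s'. split; auto. split; auto. eauto.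
    + exists s. auto.
  - exfalso. assert (Hm : le lt (rank t) z).
    { apply rank_min. intros s Rs Xs. destruct (classic (lt (rank s) z)) as [h|h]; auto.
      exfalso. apply N. exists s. split; auto. split; auto. apply not_lt_le in h. exact h. }
    exact (le_not_lt _ _ Hm Hz).
Qed.
End Rank.

Lemma ot_exists (X : O -> Prop) b : (forall x, X x -> lt x b) -> exists e, has_order_type lt X e.
Proof.
  intros Hb.
  set (r := rank O lt lt_wf X).
  assert (Hr : forall x, le lt (r x) x).
  { intro x. induction x as [x IH] using (well_founded_ind lt_wf).
    unfold r. apply rank_min. intros s Hs Xs. eapply le_lt_trans. apply IH; auto. exact Hs. }
  assert (Hbd : forall x, rbnd O lt lt_wf X x).
  { intro x. exists x. intros s Hs _. eapply le_lt_trans. apply Hr. exact Hs. }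
  set (P := fun e => forall x, X x -> lt (r x) e).
  assert (HP : P (minof P)).
  { apply (minof_P P b). intros x Xx. eapply le_lt_trans. apply Hr. auto. }
  exists (minof P). exists r. split; [exact HP|split].
  - intros x y Xx Xy. split.
    + intros H. apply rank_lt; auto.
    + intros H. destruct (lt_tri x y) as [h|[h|h]]; auto.
      * subst. exfalso. exact (lt_irr _ H).
      * exfalso. apply (lt_asym _ _ H). apply rank_lt; auto.
  - intros y Hy.
    destruct (classic (forall x, X x -> lt (r x) y)) as [A|A].
    + exfalso. exact (le_not_lt _ _ (minof_le P y A) Hy).
    + apply not_all_ex_not in A. destruct A as [x A].
      apply imply_to_and in A. destruct A as [Xx A]. apply not_lt_le in A.
      destruct A as [A|A].
      * destruct (rank_down O lt lt_wf (lt_trans) X x Xx y A) as [s [Xs [_ E]]].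
        exists s. auto.
      * exists x. auto.
Qed.

Lemma ot_seg e : has_order_type lt (fun x => lt x e) e.
Proof. exists (fun x => x). split; auto. split. intros; tauto. intros y Hy; exists y; auto. Qed.

Lemma incr_ge_id (phi : O -> O) e :
  (forall x y, lt x e -> lt y e -> lt x y -> lt (phi x) (phi y)) ->
  forall z, lt z e -> le lt z (phi z).
Proof.
  intros Hinc z. induction z as [z IH] using (well_founded_ind lt_wf). intros Hz.
  apply not_lt_le. intro H.
  assert (Hpz : lt (phi z) e) by (eapply lt_trans; eauto).
  specialize (IH (phi z) H Hpz).
  exact (le_not_lt _ _ IH (Hinc _ _ Hpz Hz H)).
Qed.

Lemma emb_le (X Y : O -> Prop) e e' (g : O -> O) :
  has_order_type lt X e -> has_order_type lt Y e' ->
  (forall x, X x -> Y (g x)) -> (forall x y, X x -> X y -> lt x y -> lt (g x) (g y)) ->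
  le lt e e'.
Proof.
  intros [hX [HX1 [HX2 HX3]]] [hY [HY1 [HY2 HY3]]] Hg1 Hg2.
  set (xz := fun z => choose z (fun x => X x /\ hX x = z)).
  assert (Hxz : forall z, lt z e -> X (xz z) /\ hX (xz z) = z).
  { intros z Hz. apply choose_spec. destruct (HX3 z Hz) as [x [A B]]. eauto. }
  set (phi := fun z => hY (g (xz z))).
  assert (Hinc : forall x y, lt x e -> lt y e -> lt x y -> lt (phi x) (phi y)).
  { intros x y Hx Hy Hxy. destruct (Hxz x Hx) as [A1 B1]. destruct (Hxz y Hy) as [A2 B2].
    unfold phi. apply (proj1 (HY2 _ _ (Hg1 _ A1) (Hg1 _ A2))). apply Hg2; auto.
    apply (proj2 (HX2 _ _ A1 A2)). rewrite B1, B2; auto. }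
  apply not_lt_le. intro H.
  pose proof (incr_ge_id phi e Hinc e' H) as Hge.
  destruct (Hxz e' H) as [A B].
  assert (lt (phi e') e') by (unfold phi; apply HY1; auto).
  exact (le_not_lt _ _ Hge H0).
Qed.

Lemma ot_unique X e e' : has_order_type lt X e -> has_order_type lt X e' -> e = e'.
Proof.
  intros H1 H2. apply le_antisym.
  apply (emb_le X X e e' (fun x => x)); auto.
  apply (emb_le X X e' e (fun x => x)); auto.
Qed.

Lemma ot_sub X Y e e' : has_order_type lt X e -> has_order_type lt Y e' ->
  (forall x, X x -> Y x) -> le lt e e'.
Proof. intros. apply (emb_le X Y e e' (fun x => x)); auto. Qed.



Lemma iso_inj (X : O -> Prop) (e : O) (h : O -> O) : (forall x y, X x -> X y -> lt x y <-> lt (h x) (h y)) ->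
  forall x y, X x -> X y -> h x = h y -> x = y.
Proof.
  intros H x y Xx Xy E. destruct (lt_tri x y) as [a|[a|a]]; auto.
  - apply (H x y Xx Xy) in a. rewrite E in a. destruct (lt_irr _ a).
  - apply (H y x Xy Xx) in a. rewrite E in a. destruct (lt_irr _ a).
Qed.

Definition inj a b := exists f : O -> O, (forall x, lt x a -> lt (f x) b) /\
  (forall x y, lt x a -> lt y a -> f x = f y -> x = y).

Lemma inj_trans a b c : inj a b -> inj b c -> inj a c.
Proof.
  intros [f [F1 F2]] [g [G1 G2]]. exists (fun x => g (f x)). split.
  - auto.
  - intros x y Hx Hy E. apply F2; auto.
Qed.

Lemma inj_le a b : le lt a b -> inj a b.
Proof. intros H. exists (fun x => x). split; auto. intros; eapply lt_le_trans; eauto. Qed.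

Lemma equi_inj a b : equipotent lt a b -> inj a b.
Proof. intros [h [H1 [H2 H3]]]. exists h. auto. Qed.

Lemma equi_sym a b : equipotent lt a b -> equipotent lt b a.
Proof.
  intros [h [H1 [H2 H3]]].
  set (g := fun y => choose y (fun x => lt x a /\ h x = y)).
  assert (G : forall y, lt y b -> lt (g y) a /\ h (g y) = y).
  { intros y Hy. apply choose_spec. auto. }
  exists g. split; [|split].
  - intros y Hy. apply G; auto.
  - intros x y Hx Hy E. destruct (G x Hx) as [_ A]. destruct (G y Hy) as [_ B]. congruence.
  - intros x Hx. exists (h x). split; auto. destruct (G (h x) (H1 x Hx)) as [A B]. apply H2; auto.
Qed.

Lemma equi_trans a b c : equipotent lt a b -> equipotent lt b c -> equipotent lt a c.
Proof.
  intros [h [H1 [H2 H3]]] [g [G1 [G2 G3]]]. exists (fun x => g (h x)). split; [|split]; auto.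
  intros z Hz. destruct (G3 z Hz) as [y [Hy E]]. destruct (H3 y Hy) as [x [Hx E']].
  exists x. split; auto. congruence.
Qed.

Lemma equi_refl a : equipotent lt a a.
Proof. exists (fun x => x). split; [|split]; auto. intros y Hy; exists y; auto. Qed.

Lemma card_inj mu d : is_cardinal lt mu -> inj mu d -> le lt mu d.
Proof.
  intros Hc [f [F1 F2]]. apply not_lt_le. intro Hd.
  set (I := fun y => exists x, lt x mu /\ f x = y).
  destruct (ot_exists I d) as [e He].
  { intros y [x [Hx E]]. subst. auto. }
  assert (Hed : le lt e d).
  { apply (ot_sub I (fun x => lt x d) e d He (ot_seg d)). intros y [x [Hx E]]; subst; auto. }
  destruct He as [r [R1 [R2 R3]]].
  set (g := fun z => choose z (fun x => lt x mu /\ r (f x) = z)).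
  assert (G : forall z, lt z e -> lt (g z) mu /\ r (f (g z)) = z).
  { intros z Hz. apply choose_spec. destruct (R3 z Hz) as [y [[x [Hx E]] E']]. subst. eauto. }
  apply (Hc e (le_lt_trans _ _ _ Hed Hd)).
  exists g. split; [|split].
  - intros z Hz. apply G; auto.
  - intros x y Hx Hy E. destruct (G x Hx) as [_ A]. destruct (G y Hy) as [_ B]. congruence.
  - intros y Hy. exists (r (f y)). assert (Iy : I (f y)) by (exists y; auto).
    split. apply R1; auto.
    destruct (G (r (f y)) (R1 _ Iy)) as [A B].
    apply F2; auto. apply (iso_inj I e r R2); auto. exists (g (r (f y))); auto.
Qed.

Definition card g := minof (fun d => equipotent lt d g).

Lemma card_spec g : equipotent lt (card g) g /\ le lt (card g) g /\ is_cardinal lt (card g).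
Proof.
  assert (E : equipotent lt (card g) g) by (exact (minof_P (fun d => equipotent lt d g) g (equi_refl g))).
  split; [exact E|split].
  - apply minof_le. apply equi_refl.
  - intros b Hb Eb. assert (equipotent lt b g) by (eapply equi_trans; eauto).
    exact (le_not_lt _ _ (minof_le (fun d => equipotent lt d g) b H) Hb).
Qed.

Definition z0 := minof (fun _ => True).
Lemma z0_zero : is_zero lt z0.
Proof. intros x H. exact (le_not_lt _ _ (minof_le (fun _ => True) x I) H). Qed.
Lemma z0_le x : le lt z0 x.
Proof. apply not_lt_le. apply z0_zero. Qed.
Lemma zero_eq x : is_zero lt x -> x = z0.
Proof. intros H. apply le_antisym. apply not_lt_le. apply H. apply z0_le. Qed.
Lemma nonzero_gt x y : lt y x -> lt z0 x.
Proof. intros H. eapply le_lt_trans. apply z0_le. exact H. Qed.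

Definition succ x := minof (fun y => lt x y).
Lemma succ_gt x y : lt x y -> lt x (succ x).
Proof. intros H. apply (minof_P (fun y => lt x y) y H). Qed.
Lemma succ_min x y : lt x y -> le lt (succ x) y.
Proof. intros H. apply minof_le. exact H. Qed.
Lemma succ_is x y : lt x y -> is_succ lt x (succ x).
Proof. intros H. split. eapply succ_gt; eauto. intros c Hc. apply succ_min; auto. Qed.
Lemma is_succ_eq b x : is_succ lt b x -> x = succ b.
Proof.
  intros [H1 H2]. apply le_antisym. apply H2. eapply succ_gt; eauto. apply succ_min; auto.
Qed.
Lemma is_succ_le b x y : is_succ lt b x -> lt y x -> le lt y b.
Proof. intros [H1 H2] Hy. apply not_lt_le. intro H. exact (le_not_lt _ _ (H2 y H) Hy). Qed.

Lemma classify x : is_zero lt x \/ is_limit lt x \/ exists b, is_succ lt b x.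
Proof.
  destruct (classic (is_zero lt x)) as [Z|Z]; auto. right.
  destruct (classic (forall b, lt b x -> exists c, lt b c /\ lt c x)) as [L|L].
  - left. split; auto.
  - right. apply not_all_ex_not in L. destruct L as [b L]. apply imply_to_and in L. destruct L as [Hb L].
    exists b. split; auto. intros c Hc. apply not_lt_le. intro Hcx. apply L. eauto.
Qed.

Lemma limit_succ_lt w x : is_limit lt w -> lt x w -> lt (succ x) w.
Proof.
  intros [_ L] Hx. destruct (L x Hx) as [c [A B]]. eapply le_lt_trans. apply succ_min; eauto. auto.
Qed.

Lemma succ_not_limit b x : is_succ lt b x -> ~ is_limit lt x.
Proof.
  intros [H1 H2] [_ L]. destruct (L b H1) as [c [A B]]. exact (le_not_lt _ _ (H2 c A) B).
Qed.

Lemma succ_inj x y : lt x (succ x) -> lt y (succ y) -> succ x = succ y -> x = y.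
Proof.
  intros Hx Hy E. destruct (lt_tri x y) as [a|[a|a]]; auto; exfalso.
  - pose proof (succ_min _ _ a). rewrite E in H. exact (le_not_lt _ _ H Hy).
  - pose proof (succ_min _ _ a). rewrite <- E in H. exact (le_not_lt _ _ H Hx).
Qed.

Definition w0 := minof (is_limit lt).

Section W0.
Hypothesis Hlim : exists w, is_limit lt w.
Lemma w0_limit : is_limit lt w0.
Proof. destruct Hlim as [w Hw]. exact (minof_P _ w Hw). Qed.
Lemma w0_least w : is_limit lt w -> le lt w0 w.
Proof. intros. apply minof_le. auto. Qed.
Lemma z0_lt_w0 : lt z0 w0.
Proof.
  destruct w0_limit as [Z _]. destruct (classic (lt z0 w0)) as [h|h]; auto.
  exfalso. apply Z. intros x Hx. apply h. eapply le_lt_trans. apply z0_le. exact Hx.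
Qed.
Lemma below_w0 y : lt y w0 -> y = z0 \/ exists x, lt x y /\ y = succ x.
Proof.
  intros Hy. destruct (classify y) as [Z|[L|[b S]]].
  - left. apply zero_eq; auto.
  - exfalso. exact (le_not_lt _ _ (w0_least y L) Hy).
  - right. exists b. split. apply S. apply is_succ_eq; auto.
Qed.

Lemma card_limit mu : is_cardinal lt mu -> le lt w0 mu -> is_limit lt mu.
Proof.
  intros Hc Hw. destruct (classify mu) as [Z|[L|[m S]]].
  - exfalso. destruct (lt_tri z0 mu) as [a|[a|a]].
    + exact (Z _ a).
    + subst. exact (le_not_lt _ _ Hw z0_lt_w0).
    + exact (z0_zero _ a).
  - exact L.
  - exfalso.
    assert (Hwm : le lt w0 m).
    { destruct Hw as [Hw|Hw].
      - apply (is_succ_le m mu); auto.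
      - subst. destruct (succ_not_limit _ _ S w0_limit). }
    assert (Hm : lt m mu) by apply S.
    assert (Hz : lt z0 m) by (eapply lt_le_trans; [apply z0_lt_w0|auto]).
    set (f := fun x => if excluded_middle_informative (x = m) then z0
                       else if excluded_middle_informative (lt x w0) then succ x else x).
    assert (Sx : forall x, lt x w0 -> lt x (succ x) /\ lt (succ x) w0).
    { intros x Hx. split. eapply succ_gt. eauto. apply limit_succ_lt; auto. apply w0_limit. }
    assert (Sx0 : forall x, lt x w0 -> succ x <> z0).
    { intros x Hx E. destruct (Sx x Hx) as [A _]. rewrite E in A. exact (z0_zero _ A). }
    assert (Nz : forall y, ~ lt y w0 -> y <> z0).
    { intros y Hy E. subst. apply Hy. apply z0_lt_w0. }
    apply (Hc m Hm). apply equi_sym.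
    exists f. split; [|split].
    + intros x Hx. unfold f. destruct (excluded_middle_informative (x = m)); auto.
      destruct (excluded_middle_informative (lt x w0)).
      * eapply lt_le_trans. apply Sx; auto. auto.
      * destruct (is_succ_le _ _ _ S Hx); auto. contradiction.
    + intros x y Hx Hy. unfold f.
      destruct (excluded_middle_informative (x = m)) as [ex|ex];
      destruct (excluded_middle_informative (y = m)) as [ey|ey];
      try (destruct (excluded_middle_informative (lt x w0)) as [lx|lx]);
      try (destruct (excluded_middle_informative (lt y w0)) as [ly|ly]); intros E;
      first [ congruence
      | exfalso; apply (Sx0 y ly); congruence
      | exfalso; apply (Sx0 x lx); congruence
      | exfalso; apply (Nz y ly); congruence
      | exfalso; apply (Nz x lx); congruence
      | apply succ_inj; [apply Sx; auto | apply Sx; auto | exact E]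
      | exfalso; apply ly; rewrite <- E; apply Sx; auto
      | exfalso; apply lx; rewrite E; apply Sx; auto ].
    + intros y Hy. destruct (classic (lt y w0)) as [ly|ly].
      * destruct (below_w0 y ly) as [Ez|[x [Hxy Ex]]].
        -- exists m. split; auto. unfold f. destruct (excluded_middle_informative (m = m)); congruence.
        -- exists x. assert (lx : lt x w0) by (eapply lt_trans; eauto).
           split. { apply (lt_trans _ _ _ Hxy). apply (lt_trans _ _ _ Hy Hm). }
           unfold f. destruct (excluded_middle_informative (x = m)) as [e|e].
           { exfalso. subst x. exact (lt_asym _ _ Hxy Hy). }
           destruct (excluded_middle_informative (lt x w0)); [congruence|contradiction].
      * exists y. split. { apply (lt_trans _ _ _ Hy Hm). } unfold f.
        destruct (excluded_middle_informative (y = m)) as [e|e].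
        { subst. destruct (lt_irr _ Hy). }
        destruct (excluded_middle_informative (lt y w0)); [contradiction|auto].
Qed.
End W0.

Section Hess.
Hypothesis Hlim : exists w, is_limit lt w.

Fixpoint phi (n : nat) : O := match n with 0 => z0 | S k => succ (phi k) end.

Lemma phi_w0 n : lt (phi n) w0.
Proof.
  induction n; simpl. apply z0_lt_w0; auto. apply limit_succ_lt; auto. apply w0_limit; auto.
Qed.
Lemma phi_S n : lt (phi n) (phi (S n)).
Proof. simpl. eapply succ_gt. apply (phi_w0 n). Qed.
Lemma phi_mono n m : (n < m)%nat -> lt (phi n) (phi m).
Proof.
  induction m; intros H. lia.
  destruct (Nat.eq_dec n m). subst. apply phi_S. eapply lt_trans. apply IHm. lia. apply phi_S.
Qed.
Lemma phi_iff n m : (n < m)%nat <-> lt (phi n) (phi m).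
Proof.
  split. apply phi_mono. intros H. destruct (Nat.lt_total n m) as [a|[a|a]]; auto.
  subst. destruct (lt_irr _ H). exfalso. exact (lt_asym _ _ H (phi_mono _ _ a)).
Qed.
Lemma phi_inj n m : phi n = phi m -> n = m.
Proof.
  intros E. destruct (Nat.lt_total n m) as [a|[a|a]]; auto; exfalso;
  pose proof (phi_mono _ _ a); rewrite E in H; exact (lt_irr _ H).
Qed.
Lemma phi_surj y : lt y w0 -> exists n, phi n = y.
Proof.
  induction y as [y IH] using (well_founded_ind lt_wf). intros Hy.
  destruct (below_w0 y Hy) as [E|[x [Hx E]]].
  - exists 0%nat. simpl. auto.
  - destruct (IH x Hx (lt_trans _ _ _ Hx Hy)) as [n En]. exists (S n). simpl. congruence.
Qed.

Definition psi y := choose 0%nat (fun n => phi n = y).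
Lemma psi_spec y : lt y w0 -> phi (psi y) = y.
Proof. intros H. apply (choose_spec 0%nat (fun n => phi n = y)). apply phi_surj; auto. Qed.

Lemma divmod_uniq n x y x' y' : (y < n)%nat -> (y' < n)%nat -> (n * x + y = n * x' + y')%nat -> x = x' /\ y = y'.
Proof.
  intros Hy Hy' E. destruct (Nat.lt_total x x') as [c|[c|c]].
  - exfalso. nia.
  - subst. split; auto. lia.
  - exfalso. nia.
Qed.

Definition pinj nu nu' := exists pi : O -> O -> O,
  (forall a b, lt a nu -> lt b nu -> lt (pi a b) nu') /\
  (forall a b a' b', lt a nu -> lt b nu -> lt a' nu -> lt b' nu -> pi a b = pi a' b' -> a = a' /\ b = b').

Lemma fin_pinj n : pinj (phi n) (phi (n * n)).
Proof.
  exists (fun a b => phi (n * psi a + psi b)).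
  assert (K : forall a, lt a (phi n) -> phi (psi a) = a /\ (psi a < n)%nat).
  { intros a Ha. assert (Ha' : lt a w0) by (eapply lt_trans; [exact Ha|apply phi_w0]).
    pose proof (psi_spec a Ha'). split; auto. apply phi_iff. congruence. }
  split.
  - intros a b Ha Hb. destruct (K a Ha) as [_ A]. destruct (K b Hb) as [_ B]. apply phi_mono. nia.
  - intros a b a' b' Ha Hb Ha' Hb' E. apply phi_inj in E.
    destruct (K a Ha) as [A1 A2]. destruct (K b Hb) as [B1 B2].
    destruct (K a' Ha') as [A1' A2']. destruct (K b' Hb') as [B1' B2'].
    assert (psi a = psi a' /\ psi b = psi b') as [E1 E2].
    { apply divmod_uniq with n; auto. }
    split; congruence.
Qed.

Definition mx a b := if excluded_middle_informative (lt a b) then b else a.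
Lemma mx_l a b : le lt a (mx a b).
Proof. unfold mx. destruct (excluded_middle_informative (lt a b)). left; auto. apply le_refl. Qed.
Lemma mx_r a b : le lt b (mx a b).
Proof. unfold mx. destruct (excluded_middle_informative (lt a b)). apply le_refl. apply not_lt_le; auto. Qed.

Definition gl (s t : O * O) : Prop :=
  lt (mx (fst s) (snd s)) (mx (fst t) (snd t)) \/
  (mx (fst s) (snd s) = mx (fst t) (snd t) /\ (lt (fst s) (fst t) \/ (fst s = fst t /\ lt (snd s) (snd t)))).

Lemma gl_wf : well_founded gl.
Proof.
  assert (H : forall m a b, mx a b = m -> Acc gl (a, b)).
  { intros m. induction m as [m IHm] using (well_founded_ind lt_wf).
    intros a. induction a as [a IHa] using (well_founded_ind lt_wf).
    intros b. induction b as [b IHb] using (well_founded_ind lt_wf).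
    intros Hm. constructor. intros [c d] H. unfold gl in H; simpl in H.
    destruct H as [H|[H1 [H2|[H2 H3]]]].
    - subst m. eapply IHm. exact H. reflexivity.
    - eapply IHa. exact H2. congruence.
    - subst c. apply IHb. exact H3. congruence. }
  intros [a b]. eapply H. reflexivity.
Qed.

Lemma gl_trans s t u : gl s t -> gl t u -> gl s u.
Proof.
  unfold gl. intros [A|[A1 A2]] [B|[B1 B2]].
  - left. eapply lt_trans; eauto.
  - left. rewrite <- B1. auto.
  - left. rewrite A1. auto.
  - right. split. congruence.
    destruct A2 as [A2|[A2 A3]]; destruct B2 as [B2|[B2 B3]].
    + left. eapply lt_trans; eauto.
    + left. rewrite <- B2. auto.
    + left. rewrite A2. auto.
    + right. split. congruence. eapply lt_trans; eauto.
Qed.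

Lemma gl_tri s t : gl s t \/ s = t \/ gl t s.
Proof.
  destruct s as [a b], t as [c d]. unfold gl; simpl.
  destruct (lt_tri (mx a b) (mx c d)) as [h|[h|h]]; auto.
  destruct (lt_tri a c) as [h1|[h1|h1]].
  - left. right. auto.
  - subst c. destruct (lt_tri b d) as [h2|[h2|h2]].
    + left. right. auto.
    + subst. auto.
    + right; right. right. split; auto.
  - right; right. right. split; auto.
Qed.

Lemma gl_comp s t : gl s t -> le lt (fst s) (mx (fst t) (snd t)) /\ le lt (snd s) (mx (fst t) (snd t)).
Proof.
  intros H. assert (M : le lt (mx (fst s) (snd s)) (mx (fst t) (snd t))).
  { destruct H as [H|[H _]]. left; auto. right; auto. }
  split; eapply le_trans; eauto. apply mx_l. apply mx_r.
Qed.

Lemma mx_lt a b mu : lt a mu -> lt b mu -> lt (mx a b) mu.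
Proof. unfold mx. destruct (excluded_middle_informative (lt a b)); auto. Qed.

Theorem hessenberg mu : is_cardinal lt mu -> le lt w0 mu -> pinj mu mu.
Proof.
  induction mu as [mu IHmu] using (well_founded_ind lt_wf). intros Hc Hw.
  assert (Lim : is_limit lt mu) by (apply card_limit; auto).
  set (X := fun t : O * O => lt (fst t) mu /\ lt (snd t) mu).
  set (r := rank (O * O) gl gl_wf X).
  assert (Claim : forall t, X t -> lt (r t) mu /\ rbnd (O * O) gl gl_wf X t).
  { intro t. induction t as [t IH] using (well_founded_ind gl_wf). intros Xt.
    assert (Bd : rbnd (O * O) gl gl_wf X t).
    { exists mu. intros s Hs Xs. apply (IH s Hs Xs). }
    split; auto.
    destruct (le_or_lt mu (r t)) as [Hge|Hlt]; [exfalso|exact Hlt].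
    destruct t as [a b]. destruct Xt as [Ha Hb]. simpl in Ha, Hb.
    assert (Hmx : lt (mx a b) mu) by (apply mx_lt; auto).
    set (m' := succ (mx a b)).
    assert (Hm' : lt m' mu) by (apply limit_succ_lt; auto).
    assert (Hmm : lt (mx a b) m') by (eapply succ_gt; eauto).
    destruct (card_spec m') as [Eq [Hle Hcard]].
    set (nu := card m') in *.
    destruct (equi_sym _ _ Eq) as [g [G1 [G2 _]]].
    assert (Hn : exists nu', lt nu' mu /\ pinj nu nu').
    { destruct (classic (lt nu w0)) as [h|h].
      - destruct (phi_surj nu h) as [n En]. exists (phi (n * n)). split.
        + eapply lt_le_trans. apply phi_w0. exact Hw.
        + rewrite <- En. apply fin_pinj.
      - exists nu. assert (Hnu : lt nu mu) by (eapply le_lt_trans; eauto). split; auto.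
        apply IHmu; auto. apply not_lt_le; auto. }
    destruct Hn as [nu' [Hnu' [pi [P1 P2]]]].
    enough (INJ : inj mu nu') by exact (le_not_lt _ _ (card_inj mu nu' Hc INJ) Hnu').
    set (sel := fun z => choose (a, b) (fun s => X s /\ gl s (a, b) /\ r s = z)).
    assert (Hsel : forall z, lt z mu -> X (sel z) /\ gl (sel z) (a, b) /\ r (sel z) = z).
    { intros z Hz. apply choose_spec.
      destruct (rank_down (O * O) gl gl_wf gl_trans X (a, b) (conj Ha Hb) z (lt_le_trans _ _ _ Hz Hge))
        as [s [Xs [Gs Es]]]. exists s. auto. }
    assert (Hc1 : forall z, lt z mu -> lt (fst (sel z)) m' /\ lt (snd (sel z)) m').
    { intros z Hz. destruct (Hsel z Hz) as [_ [Gs _]]. destruct (gl_comp _ _ Gs) as [A B]. simpl in A, B.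
      split; eapply le_lt_trans; eauto. }
    exists (fun z => pi (g (fst (sel z))) (g (snd (sel z)))). split.
    + intros z Hz. destruct (Hc1 z Hz) as [A B]. apply P1; auto.
    + intros z z' Hz Hz' E. destruct (Hc1 z Hz) as [A B]. destruct (Hc1 z' Hz') as [A' B'].
      destruct (P2 _ _ _ _ (G1 _ A) (G1 _ B) (G1 _ A') (G1 _ B') E) as [E1 E2].
      apply G2 in E1; auto. apply G2 in E2; auto.
      assert (Es : sel z = sel z') by (destruct (sel z), (sel z'); simpl in *; congruence).
      destruct (Hsel z Hz) as [_ [_ R1]]. destruct (Hsel z' Hz') as [_ [_ R2]]. congruence. }
  exists (fun a b => r (a, b)). split.
  - intros a b Ha Hb. apply (Claim (a, b)). split; auto.
  - intros a b a' b' Ha Hb Ha' Hb' E.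
    assert (X1 : X (a, b)) by (split; auto). assert (X2 : X (a', b')) by (split; auto).
    destruct (gl_tri (a, b) (a', b')) as [h|[h|h]].
    + exfalso. pose proof (rank_lt (O * O) gl gl_wf X _ _ (proj2 (Claim _ X2)) h X1).
      unfold r in E. rewrite E in H. exact (lt_irr _ H).
    + inversion h; auto.
    + exfalso. pose proof (rank_lt (O * O) gl gl_wf X _ _ (proj2 (Claim _ X1)) h X2).
      unfold r in E. rewrite E in H. exact (lt_irr _ H).
Qed.

End Hess.

Lemma cof_unique a c c' : is_cof lt a c -> is_cof lt a c' -> c = c'.
Proof.
  intros [[A [HA1 HA2]] H1] [[A' [HA1' HA2']] H1']. apply le_antisym.
  apply (H1 c' A'); auto. apply (H1' c A); auto.
Qed.

Lemma small_image mu (X : O -> Prop) d (f : O -> O) :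
  is_cardinal lt mu -> is_cof lt mu mu -> has_order_type lt X d -> lt d mu ->
  (forall x, X x -> lt (f x) mu) -> exists u, lt u mu /\ forall x, X x -> lt (f x) u.
Proof.
  intros Hc Hcof HX Hd Hf.
  destruct (classic (exists u, lt u mu /\ forall x, X x -> lt (f x) u)) as [ok|N]; auto. exfalso.
  assert (Cof : forall y, lt y mu -> exists x, X x /\ le lt y (f x)).
  { intros y Hy. destruct (classic (exists x, X x /\ le lt y (f x))) as [h|h]; auto.
    exfalso. apply N. exists y. split; auto. intros x Xx.
    destruct (classic (lt (f x) y)) as [h'|h']; auto. exfalso. apply h. exists x. split; auto.
    apply not_lt_le; auto. }
  set (U := fun y => exists x, X x /\ f x = y).
  destruct (ot_exists U mu) as [e He]. { intros y [x [Xx E]]. subst; auto. }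
  assert (Hme : le lt mu e).
  { destruct Hcof as [_ Hmin]. apply (Hmin e U); auto. split.
    - intros y [x [Xx E]]; subst; auto.
    - intros y Hy. destruct (Cof y Hy) as [x [Xx Hle]]. exists (f x). split; auto. exists x; auto. }
  destruct He as [rU [U1 [U2 U3]]].
  destruct HX as [rX [X1 [X2 X3]]].
  set (sel := fun z => choose z (fun x => X x /\ rU (f x) = z)).
  assert (Hsel : forall z, lt z mu -> X (sel z) /\ rU (f (sel z)) = z).
  { intros z Hz. apply choose_spec. destruct (U3 z (lt_le_trans _ _ _ Hz Hme)) as [y [[x [Xx E]] E']].
    subst. eauto. }
  assert (INJ : inj mu d).
  { exists (fun z => rX (sel z)). split.
    - intros z Hz. apply X1. apply Hsel; auto.
    - intros z z' Hz Hz' E. destruct (Hsel z Hz) as [A1 B1]. destruct (Hsel z' Hz') as [A2 B2].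
      assert (sel z = sel z') by (apply (iso_inj X d rX X2); auto). congruence. }
  exact (le_not_lt _ _ (card_inj mu d Hc INJ) Hd).
Qed.

Lemma pigeon alpha c kap (B : O -> Prop) (J : O -> O) :
  is_cof lt alpha c -> lt kap c -> cofinal_in lt B alpha ->
  (forall b, B b -> lt (J b) kap) ->
  (forall b b', B b -> B b' -> le lt b b' -> le lt (J b) (J b')) ->
  exists j, lt j kap /\ forall y, lt y alpha -> exists b, B b /\ le lt (J b) j /\ le lt y b.
Proof.
  intros Hcof Hkc [BC1 BC2] HJ HJm.
  destruct (classic (exists j, lt j kap /\ forall y, lt y alpha -> exists b, B b /\ le lt (J b) j /\ le lt y b))
    as [ok|N]; auto. exfalso.
  assert (N' : forall j, lt j kap -> exists y, lt y alpha /\ forall b, B b -> le lt (J b) j -> lt b y).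
  { intros j Hj. destruct (classic (exists y, lt y alpha /\ forall b, B b -> le lt (J b) j -> lt b y)) as [h|h]; auto.
    exfalso. apply N. exists j. split; auto. intros y Hy.
    destruct (classic (exists b, B b /\ le lt (J b) j /\ le lt y b)) as [h'|h']; auto. exfalso.
    apply h. exists y. split; auto. intros b Bb Hb. destruct (classic (lt b y)) as [h''|h'']; auto.
    exfalso. apply h'. exists b. split; auto. split; auto. apply not_lt_le; auto. }
  set (Bs := fun b => B b /\ forall b0, B b0 -> J b0 = J b -> le lt b b0).
  assert (BsC : forall y, lt y alpha -> exists b, Bs b /\ le lt y b).
  { intros y Hy. destruct (BC2 y Hy) as [b [Bb Hyb]].
    destruct (N' (J b) (HJ b Bb)) as [y' [Hy' Hy'b]].
    destruct (BC2 y' Hy') as [b' [Bb' Hb']].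
    assert (Jlt : lt (J b) (J b')).
    { destruct (le_or_lt (J b') (J b)) as [h|h]; auto. exfalso.
      exact (le_not_lt _ _ Hb' (Hy'b b' Bb' h)). }
    set (P := fun x => B x /\ J x = J b').
    assert (HP : P (minof P)) by (apply (minof_P P b'); split; auto).
    destruct HP as [B'' J''].
    exists (minof P). split.
    - split; auto. intros b0 Bb0 E. apply minof_le. split; auto. congruence.
    - eapply le_trans; [exact Hyb|]. destruct (le_or_lt b (minof P)) as [h|h]; auto.
      exfalso. pose proof (HJm _ _ B'' Bb (lt_le _ _ h)). rewrite J'' in H. exact (le_not_lt _ _ H Jlt). }
  destruct (ot_exists Bs alpha) as [e He]. { intros b [Bb _]. auto. }
  assert (Hek : le lt e kap).
  { apply (emb_le Bs (fun x => lt x kap) e kap J He (ot_seg kap)).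
    - intros b [Bb _]. auto.
    - intros b1 b2 [B1 M1] [B2 M2] H12. pose proof (HJm _ _ B1 B2 (lt_le _ _ H12)) as H.
      destruct H as [H|H]; auto. exfalso. exact (le_not_lt _ _ (M2 b1 B1 H) H12). }
  destruct Hcof as [_ Hmin].
  assert (Hce : le lt c e).
  { apply (Hmin e Bs); auto. split; auto. intros b [Bb _]; auto. }
  exact (le_not_lt _ _ (le_trans _ _ _ Hce Hek) Hkc).
Qed.

Lemma goodA kap (F : O -> O -> O) alpha xi (l : O -> O) (ev : O -> Prop) (jj : O -> O) c :
  is_cof lt alpha c -> lt kap c ->
  (forall eta, lt eta xi -> lt (l eta) alpha) ->
  (forall b, lt b alpha -> exists eta, lt eta xi /\ ev eta /\ lt b (l eta)) ->
  (forall eta eta', lt eta xi -> lt eta' xi -> le lt eta eta' -> le lt (l eta) (l eta')) ->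
  (forall eta, lt eta xi -> lt (jj eta) kap) ->
  (forall eta eta', lt eta xi -> lt eta' xi -> le lt eta eta' -> le lt (jj eta) (jj eta')) ->
  (forall eta' eta, lt eta' eta -> lt eta xi -> ev eta ->
     forall i, le lt (jj eta) i -> lt i kap -> lt (F (l eta') i) (F (l eta) i)) ->
  good_point lt kap F alpha.
Proof.
  intros Hcof Hkc H1 H2 H3 H4 H5 H6.
  pose proof Hcof as Hcof'. destruct Hcof' as [[B [[BC1 BC2] Bot]] Hmin].
  set (e := fun b => minof (fun eta => lt eta xi /\ ev eta /\ lt b (l eta))).
  assert (He : forall b, B b -> (lt (e b) xi /\ ev (e b) /\ lt b (l (e b))) /\
      forall eta, (lt eta xi /\ ev eta /\ lt b (l eta)) -> le lt (e b) eta).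
  { intros b Bb. exact (minof_spec (fun eta => lt eta xi /\ ev eta /\ lt b (l eta)) (H2 b (BC1 b Bb))). }
  assert (Hem : forall b b', B b -> B b' -> le lt b b' -> le lt (e b) (e b')).
  { intros b b' Bb Bb' Hbb. destruct (He b' Bb') as [[A1 [A2 A3]] _]. apply (proj2 (He b Bb)).
    split; auto. split; auto. eapply le_lt_trans; eauto. }
  set (J := fun b => jj (e b)).
  assert (P1 : forall b, B b -> lt (J b) kap).
  { intros b Bb. apply H4. apply He; auto. }
  assert (P2 : forall b b', B b -> B b' -> le lt b b' -> le lt (J b) (J b')).
  { intros b b' Bb Bb' Hbb. apply H5; [apply He; auto|apply He; auto|apply Hem; auto]. }
  destruct (pigeon alpha c kap B J Hcof Hkc (conj BC1 BC2) P1 P2) as [j [Hj Hjc]].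
  set (A := fun a => exists b, B b /\ le lt (J b) j /\ a = l (e b)).
  assert (AC : cofinal_in lt A alpha).
  { split.
    - intros a [b [Bb [_ E]]]. subst. apply H1. apply He; auto.
    - intros y Hy. destruct (Hjc y Hy) as [b [Bb [Jb Hyb]]]. exists (l (e b)). split.
      exists b; auto. left. eapply le_lt_trans; [exact Hyb|]. apply He; auto. }
  assert (Lmono : forall b b', B b -> B b' -> lt (l (e b)) (l (e b')) -> lt (e b) (e b')).
  { intros b b' Bb Bb' H. destruct (le_or_lt (e b') (e b)) as [h|h]; auto. exfalso.
    refine (le_not_lt _ _ (H3 _ _ _ _ h) H); apply He; auto. }
  exists A, c. split; [exact AC|split; [exact Hcof|split]].
  - destruct (ot_exists A alpha) as [d Hd]. { apply AC. }
    assert (Hcd : le lt c d) by (apply (Hmin d A); auto).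
    set (g := fun a => minof (fun b => B b /\ le lt (J b) j /\ a = l (e b))).
    assert (Hg : forall a, A a -> B (g a) /\ le lt (J (g a)) j /\ a = l (e (g a))).
    { intros a [b Hb]. apply (minof_P (fun b => B b /\ le lt (J b) j /\ a = l (e b)) b Hb). }
    assert (Hdc : le lt d c).
    { apply (emb_le A B d c g Hd Bot).
      - intros a Aa. apply Hg; auto.
      - intros a1 a2 A1 A2 H12. destruct (Hg a1 A1) as [G1 [_ E1]]. destruct (Hg a2 A2) as [G2 [_ E2]].
        destruct (le_or_lt (g a2) (g a1)) as [h|h]; auto. exfalso.
        pose proof (H3 _ _ (proj1 (proj1 (He _ G2))) (proj1 (proj1 (He _ G1))) (Hem _ _ G2 G1 h)).
        rewrite <- E1, <- E2 in H. exact (le_not_lt _ _ H H12). }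
    rewrite (le_antisym _ _ Hcd Hdc). exact Hd.
  - exists j. split; auto. intros i Hji Hi g d [b1 [B1 [J1 E1]]] [b2 [B2 [J2 E2]]] Hgd. subst g d.
    apply H6.
    + apply Lmono; auto.
    + apply He; auto.
    + apply He; auto.
    + eapply le_trans; eauto.
    + auto.
Qed.

Lemma decomp x : exists delta k, (is_zero lt delta \/ is_limit lt delta) /\ nsucc lt k delta x.
Proof.
  induction x as [x IH] using (well_founded_ind lt_wf).
  destruct (classify x) as [Z|[L|[b Sb]]].
  - exists x, 0%nat. split; auto. simpl. auto.
  - exists x, 0%nat. split; auto. simpl. auto.
  - destruct (IH b (proj1 Sb)) as [d [k [Hd Hk]]]. exists d, (S k). split; auto. simpl. exists b. auto.
Qed.

Lemma parity x : even_ord lt x \/ forall y, is_succ lt x y -> even_ord lt y.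
Proof.
  destruct (decomp x) as [d [k [Hd Hk]]].
  destruct (Nat.even k) eqn:E.
  - left. exists d, k. auto.
  - right. intros y Hy. exists d, (S k). split; auto. split.
    + rewrite Nat.even_succ. rewrite <- Nat.negb_even. rewrite E. reflexivity.
    + simpl. exists x. auto.
Qed.

Lemma ltstar_ext kap f g f' g' : (forall i, lt i kap -> f i = f' i) -> (forall i, lt i kap -> g i = g' i) ->
  ltstar lt kap f g -> ltstar lt kap f' g'.
Proof.
  intros Hf Hg [j [Hj H]]. exists j. split; auto. intros i Hi Hk. rewrite <- Hf, <- Hg; auto.
Qed.

Lemma ltstar_trans_le kap f g h : ltstar lt kap f g ->
  (exists j, lt j kap /\ forall i, le lt j i -> lt i kap -> le lt (g i) (h i)) -> ltstar lt kap f h.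
Proof.
  intros [j1 [Hj1 H1]] [j2 [Hj2 H2]]. destruct (le_or_lt j1 j2) as [h12|h12].
  - exists j2. split; auto. intros i Hi Hk. eapply lt_le_trans. apply H1; auto. eapply le_trans; eauto. auto.
  - exists j1. split; auto. intros i Hi Hk. eapply lt_le_trans. apply H1; auto. apply H2; auto.
    eapply le_trans; eauto. left; auto.
Qed.

Lemma good_point_ext kap F F' beta : (forall g i, lt g beta -> lt i kap -> F g i = F' g i) ->
  good_point lt kap F beta -> good_point lt kap F' beta.
Proof.
  intros HF [A [c [[AC1 AC2] [Hc [Hot [j [Hj H]]]]]]]. exists A, c. split; [split; auto|split; auto; split; auto].
  exists j. split; auto. intros i Hi Hk g d Ag Ad Hgd. rewrite <- !HF; auto.
Qed.

Lemma ot_ext (X Y : O -> Prop) e : (forall x, X x <-> Y x) -> has_order_type lt X e -> has_order_type lt Y e.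
Proof.
  intros HXY [h [H1 [H2 H3]]]. exists h. split; [|split].
  - intros x Yx. apply H1, HXY; auto.
  - intros x y Yx Yy. apply H2; apply HXY; auto.
  - intros y Hy. destruct (H3 y Hy) as [x [Xx E]]. exists x. split; auto. apply HXY; auto.
Qed.

Section Main.
Variables lambda kappa lplus : O.
Variable lam : O -> O.
Hypothesis Hsing : singular_cardinal lt lambda.
Hypothesis Hcf : is_cof lt lambda kappa.
Hypothesis Hplus : is_succ_cardinal lt lambda lplus.
Hypothesis Hreg : forall i, lt i kappa -> regular_cardinal lt (lam i).
Hypothesis Hinc : forall i j, lt i kappa -> lt j kappa -> lt i j -> lt (lam i) (lam j).
Hypothesis Hbound : forall i, lt i kappa -> lt (lam i) lambda.
Hypothesis Hconv : forall b, lt b lambda -> exists i, lt i kappa /\ lt b (lam i).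

Lemma Hlim : exists w, is_limit lt w.
Proof. destruct Hsing as [_ [[w [Wl _]] _]]. eauto. Qed.

Lemma w0_lam : le lt w0 lambda.
Proof. destruct Hsing as [_ [[w [Wl Wle]] _]]. eapply le_trans; [apply w0_least; eauto|]. exact Wle. Qed.

Lemma lam_card : is_cardinal lt lambda.
Proof. apply Hsing. Qed.
Lemma lp_card : is_cardinal lt lplus.
Proof. apply Hplus. Qed.
Lemma lam_lp : lt lambda lplus.
Proof. apply Hplus. Qed.
Lemma lp_limit : is_limit lt lplus.
Proof. apply card_limit. apply Hlim. apply lp_card. eapply le_trans. apply w0_lam. left; apply lam_lp. Qed.

Lemma kap_lam : lt kappa lambda.
Proof.
  destruct Hsing as [_ [_ [c [Hc Hcl]]]]. rewrite (cof_unique _ _ _ Hcf Hc). exact Hcl.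
Qed.

Lemma z0_lam : lt z0 lambda.
Proof. eapply lt_le_trans. apply z0_lt_w0. apply Hlim. apply w0_lam. Qed.

Lemma z0_kap : lt z0 kappa.
Proof.
  destruct Hcf as [[A [[A1 A2] [h [H1 _]]]] _].
  destruct (A2 z0 z0_lam) as [x [Ax _]]. eapply le_lt_trans. apply z0_le. apply (H1 x Ax).
Qed.

Lemma lam_pos i : lt i kappa -> lt z0 (lam i).
Proof.
  intros Hi. destruct (Hreg i Hi) as [_ [[w [Wl Wle]] _]].
  eapply lt_le_trans; [|exact Wle]. destruct Wl as [Z _].
  destruct (classic (lt z0 w)) as [h|h]; auto. exfalso. apply Z. intros x Hx. apply h.
  eapply le_lt_trans. apply z0_le. exact Hx.
Qed.

Lemma lam_le i j : lt i kappa -> lt j kappa -> le lt i j -> le lt (lam i) (lam j).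
Proof. intros Hi Hj [H|H]. left; auto. subst; apply le_refl. Qed.

Lemma pinj_lam : pinj lambda lambda.
Proof. apply hessenberg. apply Hlim. apply lam_card. apply w0_lam. Qed.

Lemma inj_lp g : lt g lplus -> inj g lambda.
Proof.
  intros Hg. destruct (card_spec g) as [E [Hle Hc]].
  assert (H : le lt (card g) lambda).
  { apply not_lt_le. intro h. destruct Hplus as [_ [_ Hmin]].
    exact (le_not_lt _ _ (Hmin _ Hc h) (le_lt_trans _ _ _ Hle Hg)). }
  eapply inj_trans. apply equi_inj. apply equi_sym. exact E. apply inj_le. exact H.
Qed.

Lemma strict_ub xi (l : O -> O) : le lt xi lambda -> (forall eta, lt eta xi -> lt (l eta) lplus) ->
  exists u, lt u lplus /\ forall eta, lt eta xi -> lt (l eta) u.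
Proof.
  intros Hxi Hl.
  destruct (classic (exists u, lt u lplus /\ forall eta, lt eta xi -> lt (l eta) u)) as [ok|N]; auto. exfalso.
  assert (Hc : forall g, lt g lplus -> exists eta, lt eta xi /\ lt g (l eta)).
  { intros g Hg. assert (Hs : lt (succ g) lplus) by (apply limit_succ_lt; auto; apply lp_limit).
    destruct (classic (exists eta, lt eta xi /\ lt g (l eta))) as [h|h]; auto. exfalso.
    apply N. exists (succ g). split; auto. intros eta Heta.
    destruct (classic (lt (l eta) (succ g))) as [h'|h']; auto. exfalso. apply h. exists eta. split; auto.
    apply not_lt_le in h'. eapply lt_le_trans; [|exact h']. eapply succ_gt; eauto. }
  set (ef := fun g => choose g (fun eta => lt eta xi /\ lt g (l eta))).
  assert (Hef : forall g, lt g lplus -> lt (ef g) xi /\ lt g (l (ef g))).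
  { intros g Hg. apply choose_spec. auto. }
  set (gf := fun eta => choose (fun x : O => x) (fun f => forall x y, lt x (l eta) -> lt y (l eta) ->
        lt (f x) lambda /\ (f x = f y -> x = y))).
  assert (Hgf : forall eta, lt eta xi -> forall x y, lt x (l eta) -> lt y (l eta) ->
        lt (gf eta x) lambda /\ (gf eta x = gf eta y -> x = y)).
  { intros eta Heta. apply (choose_spec (fun x : O => x) (fun f => forall x y, lt x (l eta) -> lt y (l eta) ->
        lt (f x) lambda /\ (f x = f y -> x = y))).
    destruct (inj_lp (l eta) (Hl eta Heta)) as [f [F1 F2]]. exists f. intros x y Hx Hy. split; auto. }
  destruct pinj_lam as [pi [P1 P2]].
  assert (INJ : inj lplus lambda).
  { exists (fun g => pi (ef g) (gf (ef g) g)). split.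
    - intros g Hg. destruct (Hef g Hg) as [A B]. apply P1. eapply lt_le_trans; eauto.
      apply (Hgf _ A g g B B).
    - intros g g' Hg Hg' E. destruct (Hef g Hg) as [A B]. destruct (Hef g' Hg') as [A' B'].
      destruct (P2 _ _ _ _ (lt_le_trans _ _ _ A Hxi) (proj1 (Hgf _ A g g B B))
                  (lt_le_trans _ _ _ A' Hxi) (proj1 (Hgf _ A' g' g' B' B')) E) as [E1 E2].
      rewrite <- E1 in E2, B'. apply (Hgf _ A g g' B B'). exact E2. }
  exact (le_not_lt _ _ (card_inj _ _ lp_card INJ) lam_lp).
Qed.

Definition jj eta := minof (fun j => lt j kappa /\ lt eta (lam j)).
Lemma jj_spec eta : lt eta lambda -> lt (jj eta) kappa /\ lt eta (lam (jj eta)).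
Proof. intros H. destruct (Hconv eta H) as [i Hi]. exact (minof_P (fun j => lt j kappa /\ lt eta (lam j)) i Hi). Qed.
Lemma jj_mono eta eta' : lt eta' lambda -> le lt eta eta' -> le lt (jj eta) (jj eta').
Proof.
  intros H Hle. apply minof_le. destruct (jj_spec eta' H) as [A B]. split; auto. eapply le_lt_trans; eauto.
Qed.
Lemma jj_lam eta i : lt eta lambda -> le lt (jj eta) i -> lt i kappa -> lt eta (lam i).
Proof.
  intros H Hi Hk. destruct (jj_spec eta H) as [A B]. eapply lt_le_trans; [exact B|]. apply lam_le; auto.
Qed.

Definition K : O -> Prop := choose (fun _ : O => False)
  (fun A => cofinal_in lt A lambda /\ has_order_type lt A kappa).
Lemma K_spec : cofinal_in lt K lambda /\ has_order_type lt K kappa.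
Proof.
  unfold K. apply (choose_spec (fun _ : O => False) (fun A => cofinal_in lt A lambda /\ has_order_type lt A kappa)).
  apply Hcf.
Qed.

Definition Dset xi eta := lt eta xi /\ (xi = lambda -> K eta).
Definition top (q : cond O) := cseq q (clen q).
Definition jD xi := if excluded_middle_informative (xi = lambda) then jj kappa else jj xi.

Lemma Dset_lam : has_order_type lt (Dset lambda) kappa.
Proof.
  destruct K_spec as [[K1 _] K2]. apply (ot_ext K); auto.
  intros x. unfold Dset. split. intros Kx. split; auto. intros [_ H]. apply H; auto.
Qed.

Lemma jD_spec xi : le lt xi lambda -> lt (jD xi) kappa /\
  forall i, le lt (jD xi) i -> lt i kappa -> exists d, has_order_type lt (Dset xi) d /\ lt d (lam i).
Proof.
  intros Hxi. unfold jD. destruct (excluded_middle_informative (xi = lambda)) as [E|E].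
  - subst xi. split. apply jj_spec. apply kap_lam.
    intros i Hi Hk. exists kappa. split. apply Dset_lam. apply jj_lam; auto. apply kap_lam.
  - assert (Hl : lt xi lambda) by (destruct Hxi; auto; contradiction).
    split. apply jj_spec; auto.
    intros i Hi Hk. exists xi. split.
    + apply (ot_ext (fun x => lt x xi)). intros x. unfold Dset. split. intros h; split; auto; intros; contradiction.
      intros [h _]; auto. apply ot_seg.
    + apply jj_lam; auto.
Qed.

Definition hval xi (r : O -> cond O) i := choose z0 (fun v => lt v (lam i) /\
  ((exists v', lt v' (lam i) /\ forall eta, Dset xi eta -> lt (top (r eta) i) v') ->
    forall eta, Dset xi eta -> lt (top (r eta) i) v)).

Lemma hval_spec xi r : le lt xi lambda ->
  (forall eta, lt eta xi -> forall i, lt i kappa -> lt (top (r eta) i) (lam i)) ->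
  (forall i, lt i kappa -> lt (hval xi r i) (lam i)) /\
  (forall i, le lt (jD xi) i -> lt i kappa -> forall eta, Dset xi eta -> lt (top (r eta) i) (hval xi r i)).
Proof.
  intros Hxi Hr.
  assert (Hp : forall i, lt i kappa -> lt (hval xi r i) (lam i) /\
    ((exists v', lt v' (lam i) /\ forall eta, Dset xi eta -> lt (top (r eta) i) v') ->
    forall eta, Dset xi eta -> lt (top (r eta) i) (hval xi r i))).
  { intros i Hi. unfold hval. apply choose_spec.
    destruct (classic (exists v', lt v' (lam i) /\ forall eta, Dset xi eta -> lt (top (r eta) i) v')) as [h|h].
    - destruct h as [v [A B]]. exists v. split; auto.
    - exists z0. split. apply lam_pos; auto. intros h'; contradiction. }
  split.
  - intros i Hi. apply Hp; auto.
  - intros i Hi Hk. apply Hp; auto.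
    destruct (jD_spec xi Hxi) as [_ J]. destruct (J i Hi Hk) as [d [Hd Hdl]].
    destruct (Hreg i Hk) as [Hc [_ Hcof]].
    apply (small_image (lam i) (Dset xi) d (fun eta => top (r eta) i) Hc Hcof Hd Hdl).
    intros eta [He _]. apply Hr; auto.
Qed.

Definition pos xi (r : O -> cond O) := minof (fun u => forall eta, lt eta xi -> lt (clen (r eta)) u).
Definition chs xi (r : O -> cond O) beta := choose z0 (fun eta => lt eta xi /\ le lt beta (clen (r eta))).
Definition Gm xi (r : O -> cond O) : cond O :=
  Cond O (pos xi r) (fun beta i => if excluded_middle_informative (beta = pos xi r) then hval xi r i
                                 else cseq (r (chs xi r beta)) beta i).
Definition dummy : cond O := Cond O z0 (fun _ _ => z0).
Definition restr xi (p : O -> cond O) eta := if excluded_middle_informative (lt eta xi) then p eta else dummy.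

Lemma restr_eq xi p eta : lt eta xi -> restr xi p eta = p eta.
Proof. intros H. unfold restr. destruct (excluded_middle_informative (lt eta xi)); auto; contradiction. Qed.

Lemma Gm_top xi r i : top (Gm xi r) i = hval xi r i.
Proof. unfold top, Gm. simpl. destruct (excluded_middle_informative (pos xi r = pos xi r)); auto. contradiction. Qed.

Lemma Gm_main xi q : le lt xi lambda ->
  (forall eta, lt eta xi -> inG lt kappa lam lplus (q eta)) ->
  (forall eta eta', lt eta xi -> lt eta' eta -> extends lt kappa (q eta) (q eta')) ->
  (forall eta, lt eta xi -> even_ord lt eta -> q eta = Gm eta (restr eta q)) ->
  inG lt kappa lam lplus (Gm xi q) /\ forall eta, lt eta xi -> extends lt kappa (Gm xi q) (q eta).
Proof.
  intros Hxi Hq1 Hq2 Hq3.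
  set (l := fun eta => clen (q eta)).
  assert (Lmono : forall eta eta', lt eta' xi -> le lt eta eta' -> le lt (l eta) (l eta')).
  { intros eta eta' H [H0|H0]. apply (Hq2 eta' eta H H0). subst; apply le_refl. }
  assert (Agree : forall e1 e2 beta i, lt e1 xi -> lt e2 xi -> le lt beta (l e1) -> le lt beta (l e2) ->
            lt i kappa -> cseq (q e1) beta i = cseq (q e2) beta i).
  { intros e1 e2 beta i H1 H2 B1 B2 Hi. destruct (lt_tri e1 e2) as [h|[h|h]].
    - symmetry. apply (Hq2 e2 e1 H2 h); auto.
    - subst; auto.
    - apply (Hq2 e1 e2 H1 h); auto. }
  assert (Hlp : forall eta, lt eta xi -> lt (l eta) lplus) by (intros eta H; apply (Hq1 eta H)).
  destruct (strict_ub xi l Hxi Hlp) as [u [Hu Hub]].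
  assert (Ppos : forall eta, lt eta xi -> lt (l eta) (pos xi q)).
  { exact (minof_P (fun u => forall eta, lt eta xi -> lt (clen (q eta)) u) u Hub). }
  assert (pos_lp : lt (pos xi q) lplus).
  { eapply le_lt_trans; [|exact Hu]. apply (minof_le (fun u => forall eta, lt eta xi -> lt (clen (q eta)) u)). exact Hub. }
  assert (Below : forall beta, lt beta (pos xi q) -> exists eta, lt eta xi /\ le lt beta (l eta)).
  { intros beta Hb. destruct (classic (exists eta, lt eta xi /\ le lt beta (l eta))) as [h|h]; auto. exfalso.
    assert (Hm : le lt (pos xi q) beta).
    { apply (minof_le (fun u => forall eta, lt eta xi -> lt (clen (q eta)) u)). intros eta He.
      destruct (classic (lt (clen (q eta)) beta)) as [h'|h']; auto. exfalso. apply h. exists eta.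
      split; auto. apply not_lt_le; auto. }
    exact (le_not_lt _ _ Hm Hb). }
  assert (Chs : forall beta, lt beta (pos xi q) -> lt (chs xi q beta) xi /\ le lt beta (l (chs xi q beta))).
  { intros beta Hb. unfold chs. apply (choose_spec z0 (fun eta => lt eta xi /\ le lt beta (clen (q eta)))).
    apply Below; auto. }
  assert (Val : forall beta i eta, lt beta (pos xi q) -> lt eta xi -> le lt beta (l eta) -> lt i kappa ->
            cseq (Gm xi q) beta i = cseq (q eta) beta i).
  { intros beta i eta Hb He Hle Hi. unfold Gm; simpl.
    destruct (excluded_middle_informative (beta = pos xi q)) as [E|E].
    - subst. destruct (lt_irr _ Hb).
    - destruct (Chs beta Hb) as [C1 C2]. apply Agree; auto. }
  assert (ValPos : forall i, cseq (Gm xi q) (pos xi q) i = hval xi q i).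
  { intros i. unfold Gm; simpl. destruct (excluded_middle_informative (pos xi q = pos xi q)); auto. contradiction. }
  assert (TopLam : forall eta, lt eta xi -> forall i, lt i kappa -> lt (top (q eta) i) (lam i)).
  { intros eta He i Hi. destruct (Hq1 eta He) as [_ G]. apply (G (clen (q eta)) (le_refl _)); auto. }
  destruct (hval_spec xi q Hxi TopLam) as [Hv1 Hv2].
  destruct (jD_spec xi Hxi) as [HjD _].
  assert (Dcof : forall eta, lt eta xi -> exists eta', Dset xi eta' /\ le lt eta eta').
  { intros eta He. destruct (classic (xi = lambda)) as [E|E].
    - subst xi. destruct K_spec as [[K1 K2] _]. destruct (K2 eta He) as [x [Kx Hx]].
      exists x. split; auto. split; auto.
    - exists eta. split. split; auto. intros; contradiction. apply le_refl. }
  split.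
  - split; [exact pos_lp|]. intros beta Hbeta. change (clen (Gm xi q)) with (pos xi q) in Hbeta. destruct Hbeta as [Hb|Hb].
    + destruct (Below beta Hb) as [eta [He Hle]].
      destruct (Hq1 eta He) as [_ G]. destruct (G beta Hle) as [G1 [G2 G3]].
      split; [|split].
      * intros i Hi. rewrite (Val beta i eta Hb He Hle Hi). apply G1; auto.
      * intros g Hg. apply ltstar_ext with (f := cseq (q eta) g) (g := cseq (q eta) beta).
        -- intros i Hi. symmetry. apply Val; auto. eapply lt_trans; eauto. eapply le_trans; eauto. left; auto.
        -- intros i Hi. symmetry. apply Val; auto.
        -- apply G2; auto.
      * intros c Hc Hkc. apply good_point_ext with (F := cseq (q eta)).
        -- intros g i Hg Hi. symmetry. apply Val; auto. eapply lt_trans; eauto. eapply le_trans; eauto. left; auto.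
        -- apply G3 with c; auto.
    + subst beta. split; [|split].
      * intros i Hi. rewrite ValPos. apply Hv1; auto.
      * intros g Hg. destruct (Below g Hg) as [eta [He Hle]]. destruct (Dcof eta He) as [eta' [Hd Hee]].
        assert (He' : lt eta' xi) by apply Hd.
        assert (Hle' : le lt g (l eta')) by (eapply le_trans; [exact Hle|apply Lmono; auto]).
        apply ltstar_ext with (f := cseq (q eta') g) (g := hval xi q).
        -- intros i Hi. symmetry. apply Val; auto.
        -- intros i Hi. symmetry. apply ValPos.
        -- destruct Hle' as [Hlt|Heq].
           ++ apply ltstar_trans_le with (g := top (q eta')).
              ** destruct (Hq1 eta' He') as [_ G]. apply (G (l eta') (le_refl _)). exact Hlt.
              ** exists (jD xi). split; auto. intros i Hi Hk. left. apply Hv2; auto.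
           ++ rewrite Heq. exists (jD xi). split; auto. intros i Hi Hk. apply Hv2; auto.
      * intros c Hc Hkc.
        destruct (classic (exists eta0, lt eta0 xi /\ forall eta, lt eta xi -> le lt (l eta) (l eta0))) as [[eta0 [H0 Hmax]]|NA].
        -- exfalso. set (A1 := fun a => a = l eta0).
           destruct (ot_exists A1 (pos xi q)) as [d Hd]. { intros a E; unfold A1 in E; subst; apply Ppos; auto. }
           assert (Hdk : le lt d kappa).
           { apply (emb_le A1 (fun x => lt x kappa) d kappa (fun _ => z0) Hd (ot_seg kappa)).
             - intros; apply z0_kap.
             - intros x y Ex Ey Hxy. unfold A1 in Ex, Ey. subst. destruct (lt_irr _ Hxy). }
           assert (Hcd : le lt c d).
           { destruct Hc as [_ Hmin]. apply (Hmin d A1); auto. split.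
             - intros a E; unfold A1 in E; subst; apply Ppos; auto.
             - intros y Hy. destruct (Below y Hy) as [eta [He Hle]]. exists (l eta0). split. reflexivity.
               eapply le_trans; [exact Hle|]. apply Hmax; auto. }
           exact (le_not_lt _ _ (le_trans _ _ _ Hcd Hdk) Hkc).
        -- destruct (classic (xi = lambda)) as [Exi|Nxi].
           ++ exfalso. set (A2 := fun a => exists eta, Dset xi eta /\ a = l eta).
              assert (A2pos : forall a, A2 a -> lt a (pos xi q)). { intros a [eta [[He _] E]]. subst. apply Ppos; auto. }
              destruct (ot_exists A2 (pos xi q) A2pos) as [d Hd].
              set (gs := fun a => minof (fun eta => Dset xi eta /\ a = l eta)).
              assert (Hgs : forall a, A2 a -> Dset xi (gs a) /\ a = l (gs a)).
              { intros a [eta He]. exact (minof_P (fun eta => Dset xi eta /\ a = l eta) eta He). }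
              assert (Hdk : le lt d kappa).
              { assert (DL : has_order_type lt (Dset xi) kappa) by (rewrite Exi; apply Dset_lam).
                apply (emb_le A2 (Dset xi) d kappa gs Hd DL).
                - intros a Aa. apply Hgs; auto.
                - intros a1 a2 A1' A2' H12. destruct (Hgs a1 A1') as [D1 E1]. destruct (Hgs a2 A2') as [D2 E2].
                  destruct (le_or_lt (gs a2) (gs a1)) as [h|h]; auto. exfalso.
                  pose proof (Lmono _ _ (proj1 D1) h) as H. rewrite <- E1, <- E2 in H. exact (le_not_lt _ _ H H12). }
              assert (Hcd : le lt c d).
              { destruct Hc as [_ Hmin]. apply (Hmin d A2); auto. split; auto.
                intros y Hy. destruct (Below y Hy) as [eta [He Hle]]. destruct (Dcof eta He) as [eta' [Hd' Hee]].
                exists (l eta'). split. exists eta'; auto. eapply le_trans; [exact Hle|]. apply Lmono; auto. apply Hd'. }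
              exact (le_not_lt _ _ (le_trans _ _ _ Hcd Hdk) Hkc).
           ++ assert (Hxl : lt xi lambda) by (destruct Hxi; auto; contradiction).
              apply (goodA kappa (cseq (Gm xi q)) (pos xi q) xi l (even_ord lt) jj c Hc Hkc).
              ** exact Ppos.
              ** intros b Hb. destruct (Below b Hb) as [eta [He Hle]].
                 assert (Hnx : exists eta', lt eta' xi /\ lt (l eta) (l eta')).
                 { destruct (classic (exists eta', lt eta' xi /\ lt (l eta) (l eta'))) as [h|h]; auto. exfalso.
                   apply NA. exists eta. split; auto. intros eta'' He''. apply not_lt_le. intro h'. apply h. eauto. }
                 destruct Hnx as [eta' [He' Hl']].
                 assert (Hb' : lt b (l eta')) by (eapply le_lt_trans; eauto).
                 destruct (parity eta') as [Ev|Od].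
                 --- exists eta'. repeat split; auto.
                 --- assert (Ss : is_succ lt eta' (succ eta')) by (apply succ_is with xi; auto).
                     assert (Sxi : lt (succ eta') xi).
                     { destruct (succ_min eta' xi He') as [h|h]; auto. exfalso. apply NA. exists eta'. split; auto.
                       intros eta'' He''. apply Lmono; auto. apply (is_succ_le eta' (succ eta')); auto. rewrite h; auto. }
                     exists (succ eta'). split; auto. split. apply Od; auto.
                     eapply lt_le_trans; [exact Hb'|]. apply Lmono; auto. left; apply Ss.
              ** intros eta eta' He He' Hle. apply Lmono; auto.
              ** intros eta He. apply jj_spec. eapply lt_trans; eauto.
              ** intros eta eta' He He' Hle. apply jj_mono; auto. eapply lt_trans; eauto.
              ** intros eta' eta H12 He Hev i Hji Hi.
                 assert (He' : lt eta' xi) by (eapply lt_trans; eauto).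
                 rewrite (Val (l eta') i eta' (Ppos eta' He') He' (le_refl _) Hi).
                 rewrite (Val (l eta) i eta (Ppos eta He) He (le_refl _) Hi).
                 change (lt (top (q eta') i) (top (q eta) i)).
                 rewrite (Hq3 eta He Hev).
                 rewrite Gm_top.
                 rewrite <- (restr_eq eta q eta' H12).
                 assert (Hel : le lt eta lambda) by (left; eapply lt_trans; eauto).
                 assert (TL : forall e, lt e eta -> forall i, lt i kappa -> lt (top (restr eta q e) i) (lam i)).
                 { intros e Hee i0 Hi0. rewrite restr_eq; auto. apply TopLam; auto. eapply lt_trans; eauto. }
                 destruct (hval_spec eta (restr eta q) Hel TL) as [_ V2].
                 assert (Nel : eta <> lambda).
                 { intros E. subst eta. exact (lt_asym _ _ He Hxl). }
                 apply V2; auto.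
                 --- unfold jD. destruct (excluded_middle_informative (eta = lambda)) as [E|E]; auto. contradiction.
                 --- split; auto. intros E; contradiction.
  - intros eta He. split.
    + simpl. left. apply Ppos; auto.
    + intros beta i Hle Hi. apply Val; auto. eapply le_lt_trans; [exact Hle|]. apply Ppos; auto.
Qed.

Theorem main_strat : strat_closed lt (inG lt kappa lam lplus) (extends lt kappa) lambda.
Proof.
  exists (fun xi p => Gm xi (restr xi p)). split.
  - intros xi p p' H. f_equal. apply functional_extensionality. intros eta. unfold restr.
    destruct (excluded_middle_informative (lt eta xi)); auto.
  - intros xi p Hxi Hev H.
    assert (Hr : forall eta, lt eta xi -> restr xi p eta = p eta) by (intros; apply restr_eq; auto).
    destruct (Gm_main xi (restr xi p) Hxi) as [A B].
    + intros eta He. rewrite Hr; auto. apply H; auto.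
    + intros eta eta' He He'. rewrite !Hr; auto. apply H; auto. eapply lt_trans; eauto.
    + intros eta He Hev'. rewrite Hr; auto. destruct (H eta He) as [_ [_ E]]. rewrite (E Hev').
      f_equal. apply functional_extensionality. intros e. unfold restr.
      destruct (excluded_middle_informative (lt e eta)); auto.
      destruct (excluded_middle_informative (lt e xi)); auto. exfalso. apply n. eapply lt_trans; eauto.
    + split; auto. intros eta He. rewrite <- Hr; auto.
Qed.

End Main.
End WO.

Theorem proposition2p10 (O : Type) (lt : O -> O -> Prop) (Hwo : well_order lt)
  (lambda kappa lplus : O) (lam : O -> O)
  (Hsing : singular_cardinal lt lambda) (Hcf : is_cof lt lambda kappa)
  (Hplus : is_succ_cardinal lt lambda lplus)
  (Hreg : forall i, lt i kappa -> regular_cardinal lt (lam i))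
  (Hinc : forall i j, lt i kappa -> lt j kappa -> lt i j -> lt (lam i) (lam j))
  (Hbound : forall i, lt i kappa -> lt (lam i) lambda)
  (Hconv : forall b, lt b lambda -> exists i, lt i kappa /\ lt b (lam i)) :
  strat_closed lt (inG lt kappa lam lplus) (extends lt kappa) lambda.
Proof.
  eapply (main_strat O lt Hwo (inhabits lambda)); eauto.
Qed.
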